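(* Let $\Omega\subset\mathbb{R}^d$ be a bounded domain, $\kappa\in L^\infty(\Omega)$ with $\kappa\ge\kappa_0>0$, $a(u,v)=\int_\Omega\kappa\nabla u\cdot\nabla v\,dx$, $\|u\|_a^2=a(u,u)$. Let $V_{H,1},V_{H,2}\subset H^1_0(\Omega)$ be finite-dimensional, $L^2(\Omega)$-orthogonal subspaces, and $\tau>0$. Define $(u,v)_{m_\tau}=(u,v)+\frac{\tau^2}{2}a(u,v)$, $\|v\|_{m_\tau}^2=(v,v)_{m_\tau}$, and operators $b_\tau:V_{H,1}\to V_{H,1}$, $c_\tau:V_{H,1}+V_{H,2}\to V_{H,1}$, $d_\tau:V_{H,1}+V_{H,2}\to V_{H,1}$ by $$(b_\tau(v_1),v)_{m_\tau}=(v_1,v),\quad (c_\tau(u),v)_{m_\tau}=\frac{\tau^2}{2}a(u,v),\quad a(d_\tau(u),v)=a(u,v)\qquad\forall v\in V_{H,1}.$$ Define for $v_1,v\in V_{H,1}$: $(v_1,v)_{s_\tau}=(v_1,v)-(b_\tau(v_1),b_\tau(v))_{m_\tau}$, $\|v_1\|_{s_\tau}^2=(v_1,v_1)_{s_\tau}$, and for $v_2\in V_{H,2}$: $\|v_2\|_{n_\tau}^2=\frac{\tau^2}{2}\|v_2\|_a^2-\|c_\tau(v_2)\|_{m_\tau}^2-\|d_\tau(v_2)\|_{s_\tau}^2$. Then for all $u_1\in V_{H,1}$ and $u_2\in V_{H,2}$, $$\|u_1\|^2+\frac{\tau^2}{2}\|u_2\|_a^2-\|b_\tau(u_1)-c_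\tau(u_2)\|_{m_\tau}^2=\|u_1+d_\tau(u_2)\|_{s_\tau}^2+\|u_2\|_{n_\tau}^2.$$
   Context: $(\cdot,\cdot)$ and $\|\cdot\|$ denote the $L^2(\Omega)$ inner product and norm. *)

(* Defs.v *)
From HB Require Import structures.
From mathcomp Require Import all_boot all_order all_algebra.
From mathcomp Require Import reals.
Set Implicit Arguments. Unset Strict Implicit. Unset Printing Implicit Defensive.
Import Order.TTheory GRing.Theory Num.Theory.
Local Open Scope ring_scope.

Section Defs.
Variables (R : realType) (H : lmodType R).

Definition sym_bilinear (f : H -> H -> R) : Prop :=
  (forall u v, f u v = f v u) /\
  (forall u v w, f (u + v) w = f u w + f v w) /\
  (forall (k : R) u v, f (k *: u) v = k * f u v).

Definition pos_def (f : H -> H -> R) : Prop :=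
  forall v, v != 0 -> 0 < f v v.

Definition fin_dim_subspace (V : H -> Prop) : Prop :=
  exists s : seq H, forall x,
    V x <-> exists c : 'I_(size s) -> R, x = \sum_(i < size s) c i *: s`_i.

Definition sum_sp (V1 V2 : H -> Prop) (x : H) : Prop :=
  exists x1 x2, [/\ V1 x1, V2 x2 & x = x1 + x2].

Definition m_ip (ip a : H -> H -> R) (tau : R) (u v : H) : R :=
  ip u v + tau ^+ 2 / 2 * a u v.

Definition s_ip (ip a : H -> H -> R) (tau : R) (b : H -> H) (v1 v : H) : R :=
  ip v1 v - m_ip ip a tau (b v1) (b v).

Definition n_norm2 (ip a : H -> H -> R) (tau : R) (b c d : H -> H) (v2 : H) : R :=
  tau ^+ 2 / 2 * a v2 v2 - m_ip ip a tau (c v2) (c v2)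
  - s_ip ip a tau b (d v2) (d v2).

End Defs.

(* Main.v *)
Require Import Defs.
From HB Require Import structures.
From mathcomp Require Import all_boot all_order all_algebra.
From mathcomp Require Import reals.
From mathcomp Require Import ring lra.
Set Implicit Arguments. Unset Strict Implicit.
Import Order.TTheory GRing.Theory Num.Theory.
Local Open Scope ring_scope.

Section Aux.
Variables (R : realType) (H : lmodType R).

Lemma sb_N (f : H -> H -> R) : sym_bilinear f -> forall u v, f (- u) v = - f u v.
Proof. move=> [_ [_ hZ]] u v. by rewrite -scaleN1r hZ mulN1r. Qed.

Lemma sb_Dr (f : H -> H -> R) : sym_bilinear f -> forall u v w, f u (v + w) = f u v + f u w.
Proof. move=> [hS [hD _]] u v w. by rewrite hS hD (hS v) (hS w). Qed.

Lemma sb_Nr (f : H -> H -> R) : sym_bilinear f -> forall u v, f u (- v) = - f u v.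
Proof. move=> hf u v. by rewrite hf.1 sb_N // hf.1. Qed.

Lemma sb_sqD (f : H -> H -> R) : sym_bilinear f -> forall x y,
  f (x + y) (x + y) = f x x + 2 * f x y + f y y.
Proof.
move=> hf x y. rewrite hf.2.1 !(sb_Dr hf) (hf.1 y x). ring.
Qed.

Lemma sb_sqB (f : H -> H -> R) : sym_bilinear f -> forall x y,
  f (x - y) (x - y) = f x x - 2 * f x y + f y y.
Proof.
move=> hf x y. rewrite (sb_sqD hf) sb_N // sb_Nr // sb_Nr // opprK. ring.
Qed.

Lemma m_sb (ip a : H -> H -> R) tau : sym_bilinear ip -> sym_bilinear a ->
  sym_bilinear (m_ip ip a tau).
Proof.
move=> [i1 [i2 i3]] [a1 [a2 a3]]; rewrite /m_ip; split; [|split].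
- by move=> u v; rewrite i1 a1.
- by move=> u v w; rewrite i2 a2; ring.
- by move=> k u v; rewrite i3 a3; ring.
Qed.

Lemma fd_closed (V : H -> Prop) : fin_dim_subspace V ->
  [/\ V 0, forall x y, V x -> V y -> V (x + y) & forall x, V x -> V (- x)].
Proof.
move=> [s hs]; split.
- apply/hs; exists (fun _ => 0); by rewrite big1 // => i _; rewrite scale0r.
- move=> x y /hs [cx ->] /hs [cy ->]; apply/hs; exists (fun i => cx i + cy i).
  by rewrite -big_split /=; apply: eq_bigr => i _; rewrite scalerDl.
- move=> x /hs [cx ->]; apply/hs; exists (fun i => - cx i).
  by rewrite -sumrN; apply: eq_bigr => i _; rewrite scaleNr.
Qed.
End Aux.

Theorem mainTheorem3 (R : realType) (H : lmodType R)
  (ip : H -> H -> R) (a : H -> H -> R)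
  (ip_sym : sym_bilinear ip) (ip_pos : pos_def ip)
  (a_sym : sym_bilinear a) (a_pos : pos_def a)
  (V1 V2 : H -> Prop)
  (V1_fd : fin_dim_subspace V1) (V2_fd : fin_dim_subspace V2)
  (V12_orth : forall v1 v2, V1 v1 -> V2 v2 -> ip v1 v2 = 0)
  (tau : R) (tau_pos : 0 < tau)
  (b c d : H -> H)
  (b_def : forall v1, V1 v1 ->
     V1 (b v1) /\ forall v, V1 v -> m_ip ip a tau (b v1) v = ip v1 v)
  (c_def : forall u, sum_sp V1 V2 u ->
     V1 (c u) /\ forall v, V1 v -> m_ip ip a tau (c u) v = tau ^+ 2 / 2 * a u v)
  (d_def : forall u, sum_sp V1 V2 u ->
     V1 (d u) /\ forall v, V1 v -> a (d u) v = a u v)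
  (u1 u2 : H) (u1_in : V1 u1) (u2_in : V2 u2) :
  ip u1 u1 + tau ^+ 2 / 2 * a u2 u2
    - m_ip ip a tau (b u1 - c u2) (b u1 - c u2)
  = s_ip ip a tau b (u1 + d u2) (u1 + d u2) + n_norm2 ip a tau b c d u2.
Proof.
have [V0 VD VN] := fd_closed V1_fd.
have VB : forall x y, V1 x -> V1 y -> V1 (x - y) by move=> x y hx hy; apply: (VD) => //; apply: VN.
have msb := m_sb tau ip_sym a_sym.
set m := m_ip ip a tau in msb b_def c_def *.
have k0 : 0 < tau ^+ 2 / 2 by apply: divr_gt0 => //; apply: exprn_gt0.
have uniq : forall w, V1 w -> (forall v, V1 v -> m w v = 0) -> w = 0.
  move=> w hw hm; apply/eqP; apply/negP => /negP hne.
  have := hm w hw; rewrite /m /m_ip.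
  have := ip_pos w hne; have := a_pos w hne.
  move=> h1 h2 h3. have : 0 < tau ^+ 2 / 2 * a w w by apply: mulr_gt0.
  lra.
have hu2 : sum_sp V1 V2 u2 by exists 0, u2; split => //; rewrite add0r.
have [cV cE] := c_def u2 hu2.
have [dV dE] := d_def u2 hu2.
have [b1V b1E] := b_def u1 u1_in.
have [bdV bdE] := b_def _ dV.
have [bsV bsE] := b_def _ (VD _ _ u1_in dV).
have bL : b (u1 + d u2) = b u1 + b (d u2).
  apply/eqP; rewrite -subr_eq0; apply/eqP; apply: (uniq).
    by apply: (VB) => //; apply: (VD).
  move=> v hv. rewrite msb.2.1 sb_N // msb.2.1 bsE // b1E // bdE //.
  rewrite ip_sym.2.1; ring.
have key : c u2 = d u2 - b (d u2).
  apply/eqP; rewrite -subr_eq0; apply/eqP; apply: (uniq).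
    by apply: (VB) => //; apply: (VB).
  move=> v hv. rewrite msb.2.1 sb_N // msb.2.1 sb_N // cE // bdE //.
  rewrite /m /m_ip dE //; ring.
rewrite /n_norm2 /s_ip -/m bL (sb_sqB msb) !(sb_sqD msb) (sb_sqD ip_sym).
have e1 : m (b u1) (c u2) = ip u1 (c u2) by rewrite b1E.
have e2 : m (b u1) (b (d u2)) = ip u1 (b (d u2)) by rewrite b1E.
have e3 : ip u1 (c u2) = ip u1 (d u2) - ip u1 (b (d u2)).
  by rewrite key sb_Dr // sb_Nr.
rewrite e1 e2 e3; ring.
Qed.
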